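(* For all $a, b \in \mathbb{N}$, $R_\mathrm{cyc}(K_a, S_b) = 1 + (a-1)(b-1)$, where $S_b$ is any star graph of order $b$.
   Context: All graphs are finite, simple and undirected, and a graph of order $n$ has vertex set $\{0,1,\ldots,n-1\}$; $K_n$ is the complete graph on $\{0,\ldots,n-1\}$. A $2$-edge-coloring of $K_n$ assigns each edge a color in $\{1,2\}$. An embedding of $H$ in color $j$ is an injective map $\varphi\colon V(H)\to V(K_n)$ such that every edge $uv$ of $H$ goes to an edge $\{\varphi(u),\varphi(v)\}$ of color $j$; it is increasing up to a cyclic permutation if there exists $t\in V(H)$ such that $(\varphi(t),\ldots,\varphi(|H|-1),\varphi(0),\ldots,\varphi(t-1))$ is increasing. $R_\mathrm{cyc}(H_1,H_2)$ is the smallest $n$ such that every $2$-edge-coloring of $K_n$ admits an embedding of $H_1$ in color $1$ or of $H_2$ in color $2$ that is increasing up to a cyclic permutation. A star graph of order $n$ is a graph on $\{0,\ldots,n-1\}$ in which one vertex (the center, arbitrary) is adjacent to all others and there are no other edges. *)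

(* Defs.v *)
From mathcomp Require Import all_boot.
Set Implicit Arguments. Unset Strict Implicit. Unset Printing Implicit Defensive.

(* A graph of order h: vertex set 'I_h = {0,...,h-1}, adjacency a relation
   (intended symmetric and irreflexive). *)

Definition complete_graph (h : nat) : rel 'I_h := fun u v => u != v.

Definition star_graph (h : nat) (c : 'I_h) : rel 'I_h :=
  fun u v => (u != v) && ((u == c) || (v == c)).

Definition two_edge_coloring (n : nat) (col : 'I_n -> 'I_n -> nat) : Prop :=
  forall i j : 'I_n, i != j -> col i j = col j i /\ (col i j = 1 \/ col i j = 2).

Definition embedding_in_color (n h : nat) (col : 'I_n -> 'I_n -> nat)
  (H : rel 'I_h) (k : nat) (phi : 'I_h -> 'I_n) : Prop :=
  injective phi /\ forall u v : 'I_h, H u v -> col (phi u) (phi v) = k.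

Definition cyc_increasing (n h : nat) (phi : 'I_h -> 'I_n) : Prop :=
  exists t : 'I_h, sorted ltn (map (fun i => val (phi i)) (rot t (enum 'I_h))).

Definition cyc_embeds (n h : nat) (col : 'I_n -> 'I_n -> nat) (H : rel 'I_h) (k : nat) : Prop :=
  exists phi : 'I_h -> 'I_n, embedding_in_color col H k phi /\ cyc_increasing phi.

Definition cyc_ramsey_prop (h1 h2 : nat) (H1 : rel 'I_h1) (H2 : rel 'I_h2) (n : nat) : Prop :=
  forall col : 'I_n -> 'I_n -> nat, two_edge_coloring col ->
    cyc_embeds col H1 1 \/ cyc_embeds col H2 2.

Definition is_Rcyc (h1 h2 : nat) (H1 : rel 'I_h1) (H2 : rel 'I_h2) (N : nat) : Prop :=
  cyc_ramsey_prop H1 H2 N /\ forall m, m < N -> ~ cyc_ramsey_prop H1 H2 m.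
Arguments complete_graph h : clear implicits.
Arguments star_graph h c : clear implicits.

(* Main.v *)
Require Import Defs.
From mathcomp Require Import all_boot zify.

Lemma inc_enum n (A : {set 'I_n}) : sorted ltn (map val (enum A)).
Proof.
  rewrite -[enum _](eq_filter (mem_enum _)).
  rewrite -(eq_filter (mem_map val_inj _)) -filter_map.
  by rewrite (sorted_filter ltn_trans) // unlock val_ord_enum iota_ltn_sorted.
Qed.

Lemma nth_rot_aux (T : Type) (x0 : T) (s : seq T) t i :
  t <= size s -> i < size s ->
  nth x0 (rot t s) i = nth x0 s (if i < size s - t then t + i else i + t - size s).
Proof.
  move=> Ht Hi; rewrite /rot nth_cat size_drop.
  case: ifP => H; first by rewrite nth_drop.
  rewrite nth_take; last by lia.
  congr nth; lia.
Qed.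

Lemma enum_embed n h (S : {set 'I_n}) (v : 'I_n) (c : 'I_h) :
  #|S| = h -> v \in S ->
  exists phi : 'I_h -> 'I_n,
    [/\ injective phi, forall i, phi i \in S, phi c = v & cyc_increasing phi].
Proof.
  move=> HS Hv.
  set s := enum S.
  have Hs : size s = h by rewrite /s -cardE.
  pose g j := nth v s j.
  have gmono : forall j l, j < l -> l < h -> val (g j) < val (g l).
    move=> j l Hjl Hl.
    have := sorted_ltn_nth ltn_trans 0 (@inc_enum _ S).
    rewrite size_map -/s Hs => /(_ j l) H.
    have := H ltac:(rewrite inE; lia) ltac:(rewrite inE; lia) Hjl.
    by rewrite !(nth_map v) ?Hs //; lia.
  have ginj : forall j l, j < h -> l < h -> g j = g l -> j = l.
    move=> j l Hj Hl E; case: (ltngtP j l) => // H.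
    - by have := gmono _ _ H Hl; rewrite E ltnn.
    - by have := gmono _ _ H Hj; rewrite E ltnn.
  have gS : forall j, j < h -> g j \in S.
    by move=> j Hj; rewrite -mem_enum; apply: mem_nth; rewrite Hs.
  pose k := index v s.
  have Hk : k < h by rewrite -Hs index_mem /s mem_enum.
  have gk : g k = v by rewrite /g nth_index // /s mem_enum.
  have hc : c < h := ltn_ord c.
  pose t := if k <= c then c - k else c + h - k.
  have Ht : t < h by rewrite /t; case: ifP; lia.
  pose sh j := if t <= j then j - t else j + h - t.
  have Hsh : forall j, j < h -> sh j < h by move=> j Hj; rewrite /sh; case: ifP; lia.
  exists (fun i : 'I_h => g (sh (nat_of_ord i))); split.
  - move=> x y /ginj E; apply: ord_inj; have := E (Hsh _ (ltn_ord x)) (Hsh _ (ltn_ord y)).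
    have := ltn_ord x; have := ltn_ord y.
    by rewrite /sh; case: ifP; case: ifP; lia.
  - by move=> i; apply: gS; apply: Hsh.
  - have -> : sh c = k by rewrite /sh /t; case: ifP; case: ifP; lia.
    exact: gk.
  - exists (Ordinal Ht); apply/(sortedP 0) => i.
    rewrite size_map size_rot size_enum_ord => Hi.
    have Hsz : size (enum 'I_h) = h by rewrite size_enum_ord.
    rewrite !(nth_map c) ?size_rot ?Hsz; try lia.
    rewrite !nth_rot_aux ?Hsz /=; try lia.
    rewrite !nth_enum_ord; try (case: ifP; lia).
    have E1 : sh (if i < h - t then t + i else i + t - h) = i.
      by rewrite /sh; case: ifP; case: ifP; lia.
    have E2 : sh (if i.+1 < h - t then t + i.+1 else i.+1 + t - h) = i.+1.
      by rewrite /sh; case: ifP; case: ifP; lia.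
    by rewrite E1 E2; apply: gmono.
Qed.
Set Implicit Arguments. Unset Strict Implicit.

Definition N2 n (col : 'I_n -> 'I_n -> nat) (v : 'I_n) : {set 'I_n} :=
  [set u | (u != v) && (col v u == 2)].

Lemma clique_lemma n b (col : 'I_n -> 'I_n -> nat) :
  two_edge_coloring col -> (forall v, #|N2 col v| < b - 1) ->
  forall k (S : {set 'I_n}), k * (b - 1) < #|S| ->
  exists C : {set 'I_n}, [/\ C \subset S, #|C| = k.+1 &
    forall x y, x \in C -> y \in C -> x != y -> col x y = 1].
Proof.
  move=> Hcol HN; elim=> [|k IH] S HS.
  - have /card_gt0P [v Hv] : 0 < #|S| by lia.
    exists [set v]; split; first by rewrite sub1set.
    + by rewrite cards1.
    + by move=> x y; rewrite !inE => /eqP -> /eqP ->; rewrite eqxx.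
  - have /card_gt0P [v Hv] : 0 < #|S| by apply: leq_ltn_trans (leq0n _) HS.
    set S' := S :\: (v |: N2 col v).
    have HS' : k * (b - 1) < #|S'|.
      have := HN v.
      have : #|S :&: (v |: N2 col v)| <= #|v |: N2 col v| by apply: subset_leq_card; apply: subsetIr.
      rewrite /S' cardsD cardsU1.
      have : (v \notin N2 col v) <= 1 by case: (v \notin _).
      move: HS; rewrite mulSn; move: (k * (b - 1)) => m; move: #|S| #|S :&: _| #|N2 col v| (v \notin N2 col v : nat) => p q r w; lia.
    have [C' [sub cC' Hc']] := IH S' HS'.
    have vC' : v \notin C'.
      apply/negP => /(subsetP sub); rewrite !inE eqxx /= => //.
    exists (v |: C'); split.
    + apply/subsetP => x; rewrite in_setU1 => /orP [/eqP -> //|/(subsetP sub)].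
      by rewrite inE => /andP [].
    + by rewrite cardsU1 vC' cC'.
    + have key : forall y, y \in C' -> col v y = 1.
        move=> y /(subsetP sub); rewrite !inE negb_or => /andP [/andP [yv yN] _].
        rewrite yv /= in yN.
        have [_ [] //] := Hcol v y ltac:(by rewrite eq_sym).
        by move=> E; rewrite E in yN.
      move=> x y; rewrite !in_setU1 => /orP [/eqP ->|Hx] /orP [/eqP ->|Hy].
      * by rewrite eqxx.
      * by move=> _; apply: key.
      * move=> xv; have [-> _] := Hcol x v xv; exact: key.
      * exact: Hc'.
Qed.

Lemma lower_bound (a b : nat) (c : 'I_b) m :
  1 <= a -> 1 <= b -> m < 1 + (a - 1) * (b - 1) ->
  ~ cyc_ramsey_prop (complete_graph a) (star_graph b c) m.
Proof.
  move=> Ha Hb Hm Hp.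
  have [m0|mpos] := posnP m.
  - subst m.
    have Hc : two_edge_coloring (fun _ _ : 'I_0 => 1) by move=> i j _; split; [|left].
    case: (Hp _ Hc) => [[phi _]|[phi _]].
    + by case: (phi (Ordinal Ha)).
    + by case: (phi c).
  have Hab : 0 < (a - 1) * (b - 1) by move: Hm mpos; move: ((a-1)*(b-1)) => P; lia.
  rewrite muln_gt0 in Hab; case/andP: Hab => Ha1 Hb1.
  pose col := fun i j : 'I_m => if i %/ (b - 1) == j %/ (b - 1) then 2 else 1.
  have Hcol : two_edge_coloring col.
    move=> i j _; rewrite /col eq_sym; split => //.
    by case: ifP; [right|left].
  case: (Hp col Hcol) => [[phi [[inj H] _]]|[phi [[inj H] _]]].
  - have blk : forall u, phi u %/ (b - 1) < a - 1.
      move=> u; rewrite ltn_divLR //; have := ltn_ord (phi u).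
      move: Hm; move: ((a-1)*(b-1)) => P; lia.
    pose f := fun u => Ordinal (blk u).
    have finj : injective f.
      move=> u w /(congr1 val) /= E; apply/eqP; apply/negPn/negP => neq.
      by have := H u w neq; rewrite /col E eqxx.
    have := leq_card f finj; rewrite !card_ord; lia.
  - have blk : forall u, phi u %/ (b - 1) = phi c %/ (b - 1).
      move=> u; case: (eqVneq u c) => [-> //|uc].
      have : star_graph b c u c by rewrite /star_graph uc eqxx orbT.
      move/H; rewrite /col; case: ifP => [/eqP -> //|_ //].
    pose f := fun u => Ordinal (ltn_pmod (phi u) Hb1).
    have finj : injective f.
      move=> u w /(congr1 val) /= E; apply: inj; apply: val_inj => /=.
      by rewrite (divn_eq (phi u) (b - 1)) (divn_eq (phi w) (b - 1)) !blk E.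
    have := leq_card f finj; rewrite !card_ord; lia.
Qed.

Lemma upper_bound (a b : nat) (c : 'I_b) :
  1 <= a -> 1 <= b ->
  cyc_ramsey_prop (complete_graph a) (star_graph b c) (1 + (a - 1) * (b - 1)).
Proof.
  move=> Ha Hb col Hcol.
  case: (boolP [exists v, b - 1 <= #|N2 col v|]).
  - move/existsP => [v Hv].
    pose T : {set 'I_(1 + (a - 1) * (b - 1))} := [set x in take (b - 1) (enum (N2 col v))].
    have cT : #|T| = b - 1.
      have U : uniq (take (b - 1) (enum (N2 col v))) by apply: take_uniq; apply: enum_uniq.
      by rewrite /T cardsE (card_uniqP U) size_takel // -cardE.
    have TN : forall x, x \in T -> x \in N2 col v.
      by move=> x; rewrite inE => /mem_take; rewrite mem_enum.
    have vT : v \notin T.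
      by apply/negP => /TN; rewrite inE eqxx.
    have cS : #|v |: T| = b by rewrite cardsU1 vT cT; lia.
    have [phi [inj inS phic _inc]] := @enum_embed _ _ _ v c cS (setU11 v T).
    right; exists phi; split => //; split => //.
    have key : forall w, w != c -> col v (phi w) = 2.
      move=> w wc; have := inS w; rewrite in_setU1 => /orP [/eqP E|/TN].
        by move: wc; rewrite -phic in E; rewrite (inj _ _ E) eqxx.
      by rewrite inE => /andP [_ /eqP].
    move=> u w; rewrite /star_graph => /andP [uw /orP [/eqP Eu|/eqP Ew]].
    + subst u; rewrite phic; apply: key; by rewrite eq_sym.
    + subst w; rewrite phic.
      have uc : phi u != v by rewrite -phic (inj_eq inj).
      have [-> _] := Hcol _ _ uc; exact: key.
  - move/existsPn => Hn.
    have HN : forall v, #|N2 col v| < b - 1 by move=> v; rewrite ltnNge; exact: Hn.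
    have Hs : (a - 1) * (b - 1) < #|[set: 'I_(1 + (a - 1) * (b - 1))]|.
      by rewrite cardsT card_ord; lia.
    have [C [_ cC Hc]] := clique_lemma Hcol HN Hs.
    have /card_gt0P [v Hv] : 0 < #|C| by rewrite cC.
    have cC' : #|C| = a by rewrite cC; lia.
    have [phi [inj inS _ inc]] := @enum_embed _ _ C v (Ordinal Ha) cC' Hv.
    left; exists phi; split => //; split => //.
    move=> u w; rewrite /complete_graph => uw.
    by apply: Hc; rewrite ?inS ?(inj_eq inj).
Qed.

Theorem corollary4p26 (a b : nat) (c : 'I_b) :
  1 <= a -> 1 <= b ->
  is_Rcyc (complete_graph a) (star_graph b c) (1 + (a - 1) * (b - 1)).
Proof.
  move=> Ha Hb; split; first exact: upper_bound.
  by move=> m Hm; apply: lower_bound.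
Qed.
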